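(* For every protocol $\Pi$, there exists $(\mathsf C,j)\in\{\mathsf A,\mathsf B\}\times\mathbb N$ such that $\mathbb E_{\ell\leftarrow L_{\Pi_{(\mathsf C,j)}}}[M^{\mathsf C}_{\Pi_{(\mathsf C,j)}}(\ell)]=1$.
   Context: Protocols are $m$-round single-bit-message protocols $(\mathsf A,\mathsf B)$ identified with the complete binary tree of height $m$, with control scheme, edge probabilities $e_\Pi(u,ub)$, output $\chi_\Pi:\text{leaves}\to\{0,1\}$, visit probabilities $v_\Pi(u)$, leaf distribution $L_\Pi$; $\Pi_u$ is the subprotocol under $u$ (or $\perp$ if $v_\Pi(u)=0$); expectations over $L_\perp$ are $0$; $\mathbb E_{L_{\Pi_u}}[M]$ is the expectation of $M$ restricted to leaves under $u$. $\mathsf A$-dominated measure $M^{\mathsf A}_\Pi$: for a 0-round protocol with leaf $\ell$, $M^{\mathsf A}_\Pi(\ell)=\chi_\Pi(\ell)$; otherwise for a leaf with first bit $b$, with $\mu_c=\mathbb E_{L_{\Pi_c}}[M^{\mathsf A}_{\Pi_c}]$: value $0$ if $e_\Pi(\lambda,b)=0$; $M^{\mathsf A}_{\Pi_b}(\ell)$ if $e_\Pi(\lambda,b)=1$, or if $e_\Pi(\lambda,b)\in(0,1)$ and ($\mathsf A$ controls the root or $\mu_b\le\mu_{1-b}$); $\frac{\mu_{1-b}}{\mu_b}M^{\mathsf A}_{\Pi_b}(\ell)$ otherwise. $M^{\mathsf B}_\Pi$ is defined identically with $\mathsf A,\mathsf B$ exchanged and base case $1-\chi_\Pi(\ell)$;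 dominated measures of $\perp$ are zero. Conditional protocol: for $\mathbb E_{L_\Pi}[M]<1$, $\Pi|_M$ keeps control and output and has $e_{\Pi|_M}(u,ub)=0$ if $\mathbb E_{L_{\Pi_u}}[M]=1$, else $e_\Pi(u,ub)\frac{1-\mathbb E_{L_{\Pi_{ub}}}[M]}{1-\mathbb E_{L_{\Pi_u}}[M]}$; $\Pi|_M=\perp$ if $\mathbb E_{L_\Pi}[M]=1$ or $\Pi=\perp$. Sequence: $\Pi_{(\mathsf A,0)}=\Pi$, $\Pi_{(\mathsf B,j)}=\Pi_{(\mathsf A,j)}|_{M^{\mathsf A}_{\Pi_{(\mathsf A,j)}}}$, $\Pi_{(\mathsf A,j+1)}=\Pi_{(\mathsf B,j)}|_{M^{\mathsf B}_{\Pi_{(\mathsf B,j)}}}$. *)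

(* Defs.v *)
From HB Require Import structures.
From mathcomp Require Import all_boot all_order all_algebra.
From mathcomp Require Import reals.
Set Implicit Arguments. Unset Strict Implicit. Unset Printing Implicit Defensive.
Import Order.TTheory GRing.Theory Num.Theory.
Local Open Scope ring_scope.

(* An m-round single-bit-message protocol, identified with the complete binary
   tree of height m.  Nodes are bit strings u : seq bool with size u <= m
   (the root is [::], the children of u are rcons u false / rcons u true),
   leaves are the strings of size exactly m.
   - ctrlA u = true  iff party A controls node u (otherwise B does);
   - edge u b        = e_Pi(u, ub);
   - out l           = chi_Pi(l) for leaves l.
   Values at non-nodes are irrelevant. *)
Record protocol (R : realType) := Protocol {
  height : nat;
  ctrlA : seq bool -> bool;
  edge : seq bool -> bool -> R;
  out : seq bool -> bool }.

Section Protocols.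
Variable R : realType.

Definition valid (P : protocol R) : Prop :=
  forall u : seq bool, (size u < height P)%N ->
    (forall b, 0 <= edge P u b <= 1) /\ edge P u false + edge P u true = 1.

Fixpoint all_strings (n : nat) : seq (seq bool) :=
  match n with
  | 0 => [:: [::]]
  | n'.+1 => [seq b :: s | b <- [:: false; true], s <- all_strings n']
  end.

Definition visit (P : protocol R) (u : seq bool) : R :=
  \prod_(i < size u) edge P (take i u) (nth false u i).

Definition expect (P : protocol R) (M : seq bool -> R) : R :=
  \sum_(l <- all_strings (height P)) visit P l * M l.

(* Expectations over L_bot are 0; None stands for bot. *)
Definition expect_opt (oP : option (protocol R)) (M : seq bool -> R) : R :=
  match oP with None => 0 | Some P => expect P M end.

Definition shift (P : protocol R) (u : seq bool) : protocol R :=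
  Protocol (height P - size u) (fun v => ctrlA P (u ++ v))
    (fun v => edge P (u ++ v)) (fun v => out P (u ++ v)).

Definition subp (P : protocol R) (u : seq bool) : option (protocol R) :=
  if visit P u == 0 then None else Some (shift P u).

Definition expU (P : protocol R) (M : seq bool -> R) (u : seq bool) : R :=
  expect_opt (subp P u) (fun l => M (u ++ l)).

(* Dominated measures.  C = true means party A (M^A), C = false means B (M^B).
   The fuel n is the height of the protocol. *)
Fixpoint dom_aux (C : bool) (n : nat) (P : protocol R) (l : seq bool) : R :=
  match n with
  | 0 => if C then (out P l)%:R else 1 - (out P l)%:R
  | n'.+1 =>
    match l with
    | [::] => 0
    | b :: l' =>
      let mu c := expect_opt (subp P [:: c])
                    (dom_aux C n' (shift P [:: c])) in
      let e := edge P [::] b in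
      let Mb := dom_aux C n' (shift P [:: b]) l' in
      if e == 0 then 0
      else if e == 1 then Mb
      else if (0 < e < 1) && ((ctrlA P [::] == C) || (mu b <= mu (~~ b)))
      then Mb
      else mu (~~ b) / mu b * Mb
    end
  end.

Definition dom (C : bool) (oP : option (protocol R)) : seq bool -> R :=
  match oP with
  | None => fun _ => 0
  | Some P => dom_aux C (height P) P
  end.

Definition cond (oP : option (protocol R)) (M : seq bool -> R)
  : option (protocol R) :=
  match oP with
  | None => None
  | Some P =>
    if expect P M == 1 then None
    else Some (Protocol (height P) (ctrlA P)
      (fun u b =>
         if expU P M u == 1 then 0
         else edge P u b * (1 - expU P M (rcons u b)) / (1 - expU P M u))
      (out P))
  end.

Fixpoint PiA (P : protocol R) (j : nat) : option (protocol R) :=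
  match j with
  | 0 => Some P
  | j'.+1 =>
    let pA := PiA P j' in
    let pB := cond pA (dom true pA) in
    cond pB (dom false pB)
  end.

Definition PiB (P : protocol R) (j : nat) : option (protocol R) :=
  cond (PiA P j) (dom true (PiA P j)).

Definition PiSeq (P : protocol R) (C : bool) (j : nat) : option (protocol R) :=
  if C then PiA P j else PiB P j.

End Protocols.

(* Main.v *)
Require Import Defs.
From HB Require Import structures.
From mathcomp Require Import all_boot all_order all_algebra.
From mathcomp Require Import reals.
From mathcomp Require Import lra zify ring.
From Stdlib Require Import FunctionalExtensionality Classical.
Set Implicit Arguments. Unset Strict Implicit. Unset Printing Implicit Defensive.
Import Order.TTheory GRing.Theory Num.Theory.
Local Open Scope ring_scope.

Section Proof.
Variable R : realType.
Implicit Types (P Q : protocol R) (M F : seq bool -> R).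

Lemma all_strings_S n : all_strings n.+1 =
  [seq false :: s | s <- all_strings n] ++ [seq true :: s | s <- all_strings n].
Proof. by rewrite /= cats0. Qed.

Lemma mem_all_strings n l : (l \in all_strings n) = (size l == n).
Proof.
elim: n l => [|n IH] [|b l] //=.
- rewrite !mem_cat in_nil orbF; apply/negbTE; apply/negP; case/orP => /mapP [s] //.
- rewrite !mem_cat in_nil orbF eqSS -IH; case: b.
  + apply/idP/idP; [by case/orP => /mapP [s Hs Heq]; case: Heq => *; subst | by move=> H; apply/orP; right; apply/map_f].
  + apply/idP/idP; [by case/orP => /mapP [s Hs Heq]; case: Heq => *; subst | by move=> H; apply/orP; left; apply/map_f].
Qed.

Lemma visit_nil P : visit P [::] = 1.
Proof. by rewrite /visit big_ord0. Qed.

Lemma visit_cat P u v : visit P (u ++ v) = visit P u * visit (shift P u) v.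
Proof.
rewrite /visit size_cat big_split_ord /=; congr (_ * _); apply: eq_bigr => i _ /=.
- by rewrite take_cat nth_cat ltn_ord.
- by rewrite take_cat nth_cat ltnNge leq_addr /= addKn.
Qed.

Lemma visit1 P b : visit P [:: b] = edge P [::] b.
Proof. by rewrite /visit big_ord1. Qed.

Lemma visit_cons P b s : visit P (b :: s) = edge P [::] b * visit (shift P [:: b]) s.
Proof. by rewrite -cat1s visit_cat visit1. Qed.

Lemma visit_rcons P u b : visit P (rcons u b) = visit P u * edge P u b.
Proof. by rewrite -cats1 visit_cat visit1 /= cats0. Qed.

Lemma protocol_ext P Q : height P = height Q -> ctrlA P =1 ctrlA Q ->
  (forall u b, edge P u b = edge Q u b) -> out P =1 out Q -> P = Q.
Proof.
case: P => h c e o; case: Q => h' c' e' o' /= -> H1 H2 H3.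
f_equal; apply: functional_extensionality => x //.
apply: functional_extensionality => y //.
Qed.

Lemma shift_cat P u v : shift (shift P u) v = shift P (u ++ v).
Proof.
apply: protocol_ext => /=; first by rewrite size_cat subnDA.
all: by move=> *; rewrite catA.
Qed.

Lemma shift_nil P : shift P [::] = P.
Proof. by apply: protocol_ext => //=; rewrite subn0. Qed.

Lemma expect_0 P F : height P = 0%N -> expect P F = F [::].
Proof. by move=> HP; rewrite /expect HP /= big_cons big_nil visit_nil mul1r addr0. Qed.

Lemma expect_S n P F : height P = n.+1 ->
  expect P F = edge P [::] false * expect (shift P [:: false]) (fun l => F (false :: l))
             + edge P [::] true * expect (shift P [:: true]) (fun l => F (true :: l)).
Proof.
move=> HP; rewrite /expect /= HP subn1 /=. rewrite cats0 big_cat !big_map.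
by congr (_ + _); rewrite big_distrr; apply: eq_bigr => l _; rewrite visit_cons /= mulrA.
Qed.


Lemma expect_ext P F G : (forall l, F l = G l) -> expect P F = expect P G.
Proof. by move=> H; rewrite /expect; apply: eq_bigr => l _; rewrite H. Qed.

Lemma expect_scale P k F : expect P (fun l => k * F l) = k * expect P F.
Proof. by rewrite /expect big_distrr; apply: eq_bigr => l _ /=; rewrite mulrCA. Qed.

Lemma subp1 P b : subp P [:: b] = if edge P [::] b == 0 then None else Some (shift P [:: b]).
Proof. by rewrite /subp visit1. Qed.

Definition W P := forall u, (size u < height P)%N -> visit P u != 0 ->
  (forall b, 0 <= edge P u b <= 1) /\ edge P u false + edge P u true = 1.

Lemma W_root n P : height P = n.+1 -> W P ->
  (forall b, 0 <= edge P [::] b <= 1) /\ edge P [::] false + edge P [::] true = 1.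
Proof. by move=> HP HW; apply: HW; rewrite ?HP // visit_nil oner_neq0. Qed.

Lemma W_shift P u : W P -> visit P u != 0 -> W (shift P u).
Proof.
move=> HW Hu v Hv Hvis; have := HW (u ++ v).
rewrite size_cat visit_cat; apply; last by rewrite mulf_neq0.
by move: Hv => /=; lia.
Qed.

Lemma W_ch P b : W P -> edge P [::] b != 0 -> W (shift P [:: b]).
Proof. by move=> HW He; apply: W_shift => //; rewrite visit1. Qed.

Lemma W_intro n P : height P = n.+1 ->
  (forall b, 0 <= edge P [::] b <= 1) -> edge P [::] false + edge P [::] true = 1 ->
  (forall b, edge P [::] b != 0 -> W (shift P [:: b])) -> W P.
Proof.
move=> HP H1 H2 H3 [|b u] Hs Hv; first by [].
move: Hv; rewrite visit_cons mulf_eq0 negb_or => /andP [He Hv].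
by apply: (H3 b He u) => //=; rewrite HP; move: Hs; rewrite HP /=; lia.
Qed.

Lemma W0 P : height P = 0%N -> W P.
Proof. by move=> HP u; rewrite HP. Qed.

Lemma valid_W P : valid P -> W P.
Proof. by move=> HV u Hu _; apply: HV. Qed.

Lemma height_ch n P b : height P = n.+1 -> height (shift P [:: b]) = n.
Proof. by move=> HP /=; rewrite HP subn1. Qed.

Lemma EB n P F : height P = n -> W P -> (forall l, 0 <= F l <= 1) ->
  0 <= expect P F <= 1.
Proof.
elim: n P F => [|n IH] P F HP HW HF; first by rewrite expect_0.
rewrite (expect_S _ HP); have [He Hs] := W_root HP HW.
have Hb : forall b, 0 <= edge P [::] b * expect (shift P [:: b]) (fun l => F (b :: l)) <= edge P [::] b.
  move=> b; have [He0 | Hn] := eqVneq (edge P [::] b) 0; first by rewrite He0 mul0r lexx.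
  have /andP [h1 h2] := IH _ (fun l => F (b :: l)) (height_ch b HP) (W_ch HW Hn) (fun l => HF _).
  have /andP [e1 e2] := He b.
  by apply/andP; split; [apply: mulr_ge0 | apply: ler_piMr].
have /andP [a1 a2] := Hb false; have /andP [b1 b2] := Hb true.
apply/andP; split; lra.
Qed.

Lemma E1 n P : height P = n -> W P -> expect P (fun _ => 1) = 1.
Proof.
elim: n P => [|n IH] P HP HW; first by rewrite expect_0.
rewrite (expect_S _ HP); have [He Hs] := W_root HP HW.
have Hb : forall b, edge P [::] b * expect (shift P [:: b]) (fun _ => 1) = edge P [::] b.
  move=> b; have [He0 | Hn] := eqVneq (edge P [::] b) 0; first by rewrite He0 mul0r.
  by rewrite (IH _ (height_ch b HP) (W_ch HW Hn)) mulr1.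
by rewrite !Hb.
Qed.


Definition muP C n P c := expect_opt (subp P [:: c]) (dom_aux C n (shift P [:: c])).

Lemma muP_eq C n P c : muP C n P c =
  if edge P [::] c == 0 then 0 else expect (shift P [:: c]) (dom_aux C n (shift P [:: c])).
Proof. by rewrite /muP subp1; case: ifP. Qed.

Lemma dom_aux_cons C n P b l : dom_aux C n.+1 P (b :: l) =
  if edge P [::] b == 0 then 0
  else if edge P [::] b == 1 then dom_aux C n (shift P [:: b]) l
  else if (0 < edge P [::] b < 1) &&
          ((ctrlA P [::] == C) || (muP C n P b <= muP C n P (~~ b)))
  then dom_aux C n (shift P [:: b]) l
  else muP C n P (~~ b) / muP C n P b * dom_aux C n (shift P [:: b]) l.
Proof. by []. Qed.

Lemma mu_bounds C n P c : height P = n.+1 -> W P ->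
  (forall c, edge P [::] c != 0 -> forall l, 0 <= dom_aux C n (shift P [:: c]) l <= 1) ->
  0 <= muP C n P c <= 1.
Proof.
move=> HP HW H; rewrite muP_eq; case: ifPn => Hc; first by rewrite lexx ler01.
exact: (EB (height_ch c HP) (W_ch HW Hc) (H c Hc)).
Qed.

Lemma DB C n P : height P = n -> W P -> forall l, 0 <= dom_aux C n P l <= 1.
Proof.
elim: n P => [|n IH] P HP HW l.
  by rewrite /=; case: C; case: (out P l); rewrite /= ?subr0 ?subrr ?lexx ?ler01.
case: l => [|b l]; first by rewrite /= lexx ler01.
have Hch : forall c, edge P [::] c != 0 -> forall l, 0 <= dom_aux C n (shift P [:: c]) l <= 1.
  by move=> c Hc; apply: IH; [apply: height_ch | apply: W_ch].
have [He Hs] := W_root HP HW.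
rewrite dom_aux_cons; case: ifPn => H0; first by rewrite lexx ler01.
case: ifPn => H1; first exact: Hch.
case: ifPn => H2; first exact: Hch.
have Hlt : 0 < edge P [::] b < 1.
  by have /andP [e1 e2] := He b; rewrite lt_def H0 e1 lt_def eq_sym H1 e2.
move: H2; rewrite Hlt /= negb_or => /andP [_]; rewrite -ltNge => Hmu.
have /andP [m1 m2] := mu_bounds (~~ b) HP HW Hch.
have /andP [d1 d2] := Hch b H0 l.
have Hpos : 0 < muP C n P b by apply: le_lt_trans Hmu.
have /andP [r1 r2] : 0 <= muP C n P (~~ b) / muP C n P b <= 1.
  apply/andP; split; first by apply: divr_ge0 => //; apply: ltW.
  by rewrite ler_pdivrMr // mul1r ltW.
apply/andP; split; first exact: mulr_ge0.
by rewrite -(mulr1 1); apply: ler_pM.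
Qed.

Lemma shape C n P b : height P = n.+1 -> W P -> edge P [::] b != 0 ->
  exists k, (forall l, dom_aux C n.+1 P (b :: l) = k * dom_aux C n (shift P [:: b]) l) /\
   ((k = 1 /\ (edge P [::] b = 1 \/ ctrlA P [::] = C \/ muP C n P b <= muP C n P (~~ b))) \/
    (k = muP C n P (~~ b) / muP C n P b /\ muP C n P (~~ b) < muP C n P b /\
     edge P [::] b != 1 /\ ctrlA P [::] != C)).
Proof.
move=> HP HW H0; have [He Hs] := W_root HP HW.
have [H1 | H1] := eqVneq (edge P [::] b) 1.
  exists 1; split; first by move=> l; rewrite dom_aux_cons (negbTE H0) H1 eqxx mul1r.
  by left; split; [|left].
have Hlt : 0 < edge P [::] b < 1.
  by have /andP [e1 e2] := He b; rewrite lt_def H0 e1 lt_def eq_sym H1 e2.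
have [H2 | H2] := boolP ((ctrlA P [::] == C) || (muP C n P b <= muP C n P (~~ b))).
  exists 1; split; first by move=> l; rewrite dom_aux_cons (negbTE H0) (negbTE H1) Hlt H2 mul1r.
  left; split => //; right; case/orP: H2 => [/eqP ->|->]; [left|right] => //.
exists (muP C n P (~~ b) / muP C n P b); split.
  by move=> l; rewrite dom_aux_cons (negbTE H0) (negbTE H1) Hlt (negbTE H2).
right; move: H2; rewrite negb_or => /andP [H3 H4]; rewrite -ltNge in H4.
by do 3 (split => //).
Qed.


Definition condP P M := Protocol (height P) (ctrlA P)
  (fun u b => if expU P M u == 1 then 0
              else edge P u b * (1 - expU P M (rcons u b)) / (1 - expU P M u))
  (out P).

Lemma cond_Some P M : expect P M != 1 -> cond (Some P) M = Some (condP P M).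
Proof. by move=> H; rewrite /= (negbTE H). Qed.

Lemma expU_nil P M : expU P M [::] = expect P M.
Proof. by rewrite /expU /subp visit_nil oner_eq0 /= shift_nil. Qed.

Lemma expU_cons P M b v : edge P [::] b != 0 ->
  expU P M (b :: v) = expU (shift P [:: b]) (fun l => M (b :: l)) v.
Proof.
move=> H; rewrite /expU /subp visit_cons mulf_eq0 (negbTE H) /=.
by case: ifP => // _; rewrite shift_cat.
Qed.

Lemma expU1 P M b : expU P M [:: b] =
  if edge P [::] b == 0 then 0 else expect (shift P [:: b]) (fun l => M (b :: l)).
Proof. by rewrite /expU subp1; case: ifP. Qed.

Lemma ch_condP P M b : edge P [::] b != 0 ->
  shift (condP P M) [:: b] = condP (shift P [:: b]) (fun l => M (b :: l)).
Proof.
move=> H; apply: protocol_ext => // u c.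
by rewrite /= !expU_cons.
Qed.

Lemma root_cond n P M : height P = n.+1 -> W P -> (forall l, 0 <= M l <= 1) ->
  expect P M != 1 ->
  let x := expect P M in let y c := expU P M [:: c] in
  [/\ forall c, 0 <= y c <= 1, x = edge P [::] false * y false + edge P [::] true * y true,
      x < 1 &
      forall c, edge (condP P M) [::] c = edge P [::] c * (1 - y c) / (1 - x)].
Proof.
move=> HP HW HM Hx x y.
have Hy : forall c, 0 <= y c <= 1.
  move=> c; rewrite /y expU1; case: ifPn => Hc; first by rewrite lexx ler01.
  exact: (EB (height_ch c HP) (W_ch HW Hc) (fun l => HM _)).
have Hxe : x = edge P [::] false * y false + edge P [::] true * y true.
  rewrite /x (expect_S _ HP) /y !expU1.
  by congr (_ + _); case: ifPn => [/eqP ->|]; rewrite ?mul0r.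
split => //.
  have [He Hs] := W_root HP HW.
  have /andP [a1 a2] := Hy false; have /andP [b1 b2] := Hy true.
  have /andP [e1 e2] := He false; have /andP [f1 f2] := He true.
  have : x <= 1 by rewrite Hxe; nra.
  by rewrite le_eqVlt (negbTE Hx).
move=> c; rewrite /= expU_nil (negbTE Hx) //.
Qed.

Lemma WC n P M : height P = n -> W P -> (forall l, 0 <= M l <= 1) ->
  expect P M != 1 -> W (condP P M).
Proof.
elim: n P M => [|n IH] P M HP HW HM Hx; first exact: W0.
have [Hy Hxe Hx1 Hq] := root_cond HP HW HM Hx.
have [He Hs] := W_root HP HW.
set x := expect P M in Hxe Hx1 Hq; set y := fun c => expU P M [:: c] in Hy Hxe Hq.
have Hd : 0 < 1 - x by rewrite subr_gt0.
have Hdx : 1 - x = edge P [::] false * (1 - y false) + edge P [::] true * (1 - y true).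
  rewrite Hxe; transitivity ((edge P [::] false + edge P [::] true) -
     (edge P [::] false * y false + edge P [::] true * y true)); first by rewrite Hs.
  by ring.
have Hnn : forall c, 0 <= edge P [::] c * (1 - y c).
  move=> c; have /andP [a1 a2] := Hy c; have /andP [e1 e2] := He c.
  by apply: mulr_ge0 => //; rewrite subr_ge0.
have Hnum : forall c, 0 <= edge P [::] c * (1 - y c) <= 1 - x.
  move=> c; rewrite Hnn Hdx /=; have := Hnn false; have := Hnn true.
  by case: c => ? ?; lra.
apply: (W_intro (n := n)) => //.
- move=> c; rewrite Hq; have /andP [h1 h2] := Hnum c.
  apply/andP; split; first by apply: divr_ge0 => //; apply: ltW.
  by rewrite ler_pdivrMr // mul1r.
- by rewrite !Hq -mulrDl -Hdx divff // gt_eqF.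
- move=> c; rewrite Hq !mulf_eq0 !negb_or => /andP [/andP [He0 Hy1] _].
  rewrite ch_condP //; apply: (IH _ _ (height_ch c HP) (W_ch HW He0) (fun l => HM _)).
  move: Hy1; rewrite /y expU1 (negbTE He0) subr_eq0 eq_sym //.
Qed.


Lemma sum_neg P b : edge P [::] false + edge P [::] true = 1 ->
  edge P [::] (~~ b) = 1 - edge P [::] b.
Proof. by case: b => /= H; rewrite -H; ring. Qed.

Lemma Z C n P : height P = n -> W P -> expect P (dom_aux C n P) != 1 ->
  expect (condP P (dom_aux C n P)) (dom_aux C n (condP P (dom_aux C n P))) = 0.
Proof.
elim: n P => [|n IH] P HP HW Hx.
  move: Hx; rewrite !expect_0 //=.
  by case: C; case: (out P [::]); rewrite /= ?subr0 ?subrr ?eqxx.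
set M := dom_aux C n.+1 P; set Q := condP P M.
have HQ : height Q = n.+1 by [].
have HM := DB C HP HW.
have WQ : W Q := WC HP HW HM Hx.
have [Hy Hxe Hx1 Hq] := root_cond HP HW HM Hx.
have [He Hs] := W_root HP HW.
have [HeQ HsQ] := W_root HQ WQ.
have Hd : 0 < 1 - expect P M by rewrite subr_gt0.
have Hqnz : forall c, edge Q [::] c != 0 ->
    edge P [::] c != 0 /\ expect (shift P [:: c]) (fun l => M (c :: l)) != 1.
  move=> c; rewrite Hq !mulf_eq0 !negb_or => /andP [/andP [He0 Hy1] _]; split => //.
  by move: Hy1; rewrite expU1 (negbTE He0) subr_eq0 eq_sym.
have HchP : forall c, edge P [::] c != 0 -> forall l, 0 <= dom_aux C n (shift P [:: c]) l <= 1.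
  by move=> c Hc; apply: DB; [apply: height_ch | apply: W_ch].
have Hzero : forall c, edge Q [::] c != 0 ->
    (forall l, M (c :: l) = dom_aux C n (shift P [:: c]) l) ->
    muP C n Q c = 0.
  move=> c Hc Hunsc; have [He0 Hy1] := Hqnz c Hc.
  rewrite muP_eq (negbTE Hc) /Q ch_condP //.
  have -> : (fun l => M (c :: l)) = dom_aux C n (shift P [:: c]).
    by apply: functional_extensionality.
  apply: IH; [exact: height_ch | exact: W_ch |].
  by move: Hy1; rewrite (expect_ext _ Hunsc).
rewrite (expect_S _ HQ).
suff Hb : forall b, edge Q [::] b *
    expect (shift Q [:: b]) (fun l => dom_aux C n.+1 Q (b :: l)) = 0.
  by rewrite !Hb addr0.
move=> b; have [Hq0 | Hqn] := eqVneq (edge Q [::] b) 0; first by rewrite Hq0 mul0r.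
have [He0 Hy1] := Hqnz b Hqn.
have [kQ [HkQ brQ]] := shape C HQ WQ Hqn.
rewrite (expect_ext _ HkQ) expect_scale.
set nu := expect _ _.
have Hnu : muP C n Q b = nu by rewrite muP_eq (negbTE Hqn).
have Hnu0 : 0 <= nu.
  have /andP [] := EB (height_ch b HQ) (W_ch WQ Hqn) (DB C (height_ch b HQ) (W_ch WQ Hqn)) => //.
suff -> : kQ * nu = 0 by rewrite mulr0.
have [kP [HkP brP]] := shape C HP HW He0.
case: brP => [[kP1 _] | [kP2 [Hmu [He1 Hctrl]]]].
  by rewrite -Hnu Hzero ?mulr0 // => l; rewrite /M HkP kP1 mul1r.
have Hs' := sum_neg b Hs.
have Hnb0 : edge P [::] (~~ b) != 0 by rewrite Hs' subr_eq0 eq_sym.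
have [kP' [HkP' brP']] := shape C HP HW Hnb0.
have kP'1 : kP' = 1.
  case: brP' => [[] // | [_ [Hmu' _]]].
  by move: Hmu'; rewrite negbK => Hmu'; have := lt_trans Hmu Hmu'; rewrite ltxx.
have Hunsc : forall l, M (~~ b :: l) = dom_aux C n (shift P [:: ~~ b]) l.
  by move=> l; rewrite /M HkP' kP'1 mul1r.
have HmuQnb : muP C n Q (~~ b) = 0.
  rewrite muP_eq; case: ifPn => // Hc; rewrite -[RHS](Hzero _ Hc Hunsc) muP_eq (negbTE Hc) //.
have Hqb1 : edge Q [::] b != 1.
  apply/negP => /eqP Hq1.
  have Hqnb : edge Q [::] (~~ b) = 0 by rewrite (sum_neg b HsQ) Hq1 subrr.
  have Hynb : expU P M [:: ~~ b] = muP C n P (~~ b).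
    by rewrite expU1 muP_eq (negbTE Hnb0); apply: expect_ext.
  move: Hqnb; rewrite Hq Hynb => /eqP; rewrite !mulf_eq0 (negbTE Hnb0) invr_eq0 (gt_eqF Hd).
  rewrite orbF orFb subr_eq0 => /eqP Hm.
  have /andP [_ m2] := mu_bounds b HP HW HchP.
  by move: Hmu; rewrite -Hm => Hlt; have := lt_le_trans Hlt m2; rewrite ltxx.
case: brQ => [[-> [/eqP Hq1 | [Hc | Hle]]] | [-> _]].
- by rewrite Hq1 in Hqb1.
- by rewrite Hc eqxx in Hctrl.
- by rewrite mul1r; apply/eqP; rewrite eq_le Hnu0 -Hnu -HmuQnb Hle.
- by rewrite HmuQnb mul0r mul0r.
Qed.


Lemma unsc n P c : height P = n.+1 -> W P -> edge P [::] c != 0 ->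
  (edge P [::] c = 1 \/ forall C', ctrlA P [::] != C' -> muP C' n P c <= muP C' n P (~~ c)) ->
  forall C' l, dom_aux C' n.+1 P (c :: l) = dom_aux C' n (shift P [:: c]) l.
Proof.
move=> HP HW Hc Hor C' l; have [k [Hk br]] := shape C' HP HW Hc.
rewrite Hk; case: br => [[-> _] | [_ [Hmu [He1 Hctrl]]]]; first by rewrite mul1r.
case: Hor => [He | H]; first by rewrite He eqxx in He1.
by have := H C' Hctrl; rewrite leNgt Hmu.
Qed.

Lemma Olem n P : height P = n -> W P -> exists l, size l = n /\ visit P l != 0 /\
  (dom_aux true n P l = 1 \/ dom_aux false n P l = 1).
Proof.
elim: n P => [|n IH] P HP HW.
  exists [::]; rewrite visit_nil oner_neq0; split => //; split => //=.
  by case: (out P [::]); [left|right]; rewrite /= ?subr0.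
have [He Hs] := W_root HP HW.
suff [c [Hc Hu]] : exists c, edge P [::] c != 0 /\
    forall C' l, dom_aux C' n.+1 P (c :: l) = dom_aux C' n (shift P [:: c]) l.
  have [l [Hl [Hv Hd]]] := IH _ (height_ch c HP) (W_ch HW Hc).
  exists (c :: l); rewrite !Hu visit_cons mulf_neq0 //; split => //; by rewrite /= Hl.
have [H0 | H0] := eqVneq (edge P [::] false) 0.
  have H1 : edge P [::] true = 1 by rewrite -Hs H0 add0r.
  have Ht : edge P [::] true != 0 by rewrite H1 oner_neq0.
  by exists true; split => //; apply: unsc => //; left.
have [H1 | H1] := eqVneq (edge P [::] true) 0.
  have H2 : edge P [::] false = 1 by rewrite -Hs H1 addr0.
  by exists false; split => //; apply: unsc => //; left.
set D := ctrlA P [::].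
have [Hle | Hlt] := leP (muP (~~ D) n P false) (muP (~~ D) n P true).
  exists false; split => //; apply: unsc => //; right => C' HC'.
  by have -> : C' = ~~ D by move: HC'; rewrite /D; case: C'; case: (ctrlA P [::]).
exists true; split => //; apply: unsc => //; right => C' HC'.
have -> : C' = ~~ D by move: HC'; rewrite /D; case: C'; case: (ctrlA P [::]).
exact: ltW.
Qed.


Lemma expU_bounds P M u : W P -> (forall l, 0 <= M l <= 1) -> 0 <= expU P M u <= 1.
Proof.
move=> HW HM; rewrite /expU /subp; case: ifPn => Hv /=; first by rewrite lexx ler01.
exact: (EB (erefl _) (W_shift HW Hv) (fun l => HM _)).
Qed.

Lemma expU_dec P M u : W P -> (size u < height P)%N -> visit P u != 0 ->
  expU P M u = edge P u false * expU P M (rcons u false)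
             + edge P u true * expU P M (rcons u true).
Proof.
move=> HW Hs Hv.
have HS : height (shift P u) = (height P - size u - 1).+1 by rewrite /=; lia.
have Hc : forall c, edge (shift P u) [::] c *
    expect (shift (shift P u) [:: c]) (fun l => M (u ++ c :: l)) =
    edge P u c * expU P M (rcons u c).
  move=> c; rewrite /= cats0 shift_cat cats1 /expU /subp visit_rcons mulf_eq0 (negbTE Hv) /=.
  case: ifPn => [/eqP -> | Hc]; rewrite ?mul0r //=.
  by congr (_ * _); apply: expect_ext => l; rewrite cat_rcons.
by rewrite {1}/expU /subp (negbTE Hv) /= (expect_S _ HS) -!Hc.
Qed.

Lemma edge_condP P M u b : edge (condP P M) u b =
  if expU P M u == 1 then 0
  else edge P u b * (1 - expU P M (rcons u b)) / (1 - expU P M u).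
Proof. by []. Qed.

Lemma visit_cond P M : W P -> (forall l, 0 <= M l <= 1) -> expect P M != 1 ->
  forall u, (size u <= height P)%N ->
  visit (condP P M) u * (1 - expect P M) = visit P u * (1 - expU P M u).
Proof.
move=> HW HM Hx; elim/last_ind => [|u b IHu] Hs.
  by rewrite !visit_nil expU_nil.
rewrite size_rcons in Hs.
have IH := IHu (ltnW Hs).
have Hd : 1 - expect P M != 0 by rewrite subr_eq0 eq_sym.
rewrite !visit_rcons.
have [Hv0 | Hv] := eqVneq (visit P u) 0.
  have HQ0 : visit (condP P M) u = 0.
    by move: IH; rewrite Hv0 mul0r => /eqP; rewrite mulf_eq0 (negbTE Hd) orbF => /eqP.
  by rewrite Hv0 HQ0 !mul0r.
have [Hw Hsum] := HW u Hs Hv.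
have Hdec := expU_dec M HW Hs Hv.
rewrite edge_condP; case: ifPn => [/eqP Hu1 | Hu1].
  have Hnn : forall c, 0 <= edge P u c * (1 - expU P M (rcons u c)).
    move=> c; have /andP [a1 a2] := expU_bounds (rcons u c) HW HM; have /andP [e1 e2] := Hw c.
    by apply: mulr_ge0 => //; rewrite subr_ge0.
  have H0 : edge P u false * (1 - expU P M (rcons u false)) +
            edge P u true * (1 - expU P M (rcons u true)) = 0.
    transitivity ((edge P u false + edge P u true) -
      (edge P u false * expU P M (rcons u false) + edge P u true * expU P M (rcons u true))).
      by ring.
    by rewrite Hsum -Hdec Hu1 subrr.
  move: H0 => /eqP; rewrite paddr_eq0 // => /andP [/eqP h1 /eqP h2].
  by rewrite mulr0 mul0r -mulrA; case: b; rewrite ?h1 ?h2 mulr0.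
rewrite mulrAC IH; field; by rewrite subr_eq0 eq_sym.
Qed.

Lemma expU_leaf P M l : size l = height P -> visit P l != 0 -> expU P M l = M l.
Proof.
move=> Hs Hv; rewrite /expU /subp (negbTE Hv) /= expect_0 ?cats0 //=.
by rewrite Hs subnn.
Qed.

Lemma cond_support P M l : W P -> (forall l, 0 <= M l <= 1) -> expect P M != 1 ->
  size l = height P -> visit (condP P M) l != 0 -> visit P l != 0 /\ M l != 1.
Proof.
move=> HW HM Hx Hs HvQ.
have Hd : 1 - expect P M != 0 by rewrite subr_eq0 eq_sym.
have H := visit_cond HW HM Hx (eq_leq Hs).
have Hl : visit (condP P M) l * (1 - expect P M) != 0 by rewrite mulf_neq0.
have [Hv0 | Hv] := eqVneq (visit P l) 0; first by move: Hl; rewrite H Hv0 mul0r eqxx.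
split => //; apply/negP => /eqP Hm.
by move: Hl; rewrite H expU_leaf // Hm subrr mulr0 eqxx.
Qed.


Definition supp P := count (fun l => visit P l != 0) (all_strings (height P)).

Lemma visit_ge0 P u : W P -> (size u <= height P)%N -> 0 <= visit P u.
Proof.
move=> HW; elim/last_ind: u => [|u b IH] Hs; first by rewrite visit_nil ler01.
rewrite size_rcons in Hs; rewrite visit_rcons.
have [Hv0 | Hv] := eqVneq (visit P u) 0; first by rewrite Hv0 mul0r.
have [Hw _] := HW u Hs Hv; have /andP [e1 _] := Hw b.
by apply: mulr_ge0 => //; apply: IH; apply: ltnW.
Qed.

Lemma pos_terms P F : W P -> (forall l, 0 <= F l) -> expect P F = 0 ->
  forall l, size l = height P -> visit P l != 0 -> F l = 0.
Proof.
move=> HW HF HE l Hs Hv.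
move: HE => /eqP; rewrite /expect big_seq psumr_eq0.
  move=> /allP /(_ l); rewrite mem_all_strings Hs eqxx => /(_ isT) /implyP /(_ isT).
  by rewrite mulf_eq0 (negbTE Hv) /= => /eqP.
move=> i; rewrite mem_all_strings => /eqP Hi; apply: mulr_ge0 => //.
by apply: visit_ge0 HW _; rewrite Hi.
Qed.

Lemma supp_pos P : W P -> (0 < supp P)%N.
Proof.
move=> HW; rewrite /supp -has_count; apply/negPn/negP => /hasPn Hn.
have : expect P (fun _ => 1) = 0.
  rewrite /expect big_seq big1 // => l Hl.
  by have := Hn l Hl; rewrite negbK => /eqP ->; rewrite mul0r.
by rewrite (E1 (erefl _) HW) => /eqP; rewrite oner_eq0.
Qed.

Lemma count_le_in (T : eqType) (a b : pred T) s :
  (forall x, x \in s -> a x -> b x) -> (count a s <= count b s)%N.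
Proof.
elim: s => //= x s IH H.
have H' : forall y, y \in s -> a y -> b y by move=> y Hy; apply: H; rewrite inE Hy orbT.
have Hx : (a x <= b x)%N.
  by case: (a x) (H x (mem_head x s)) => //= /(_ isT) ->.
have := IH H'; lia.
Qed.

Lemma count_lt_in (T : eqType) (a b : pred T) s :
  (forall x, x \in s -> a x -> b x) -> (exists2 x, x \in s & b x && ~~ a x) ->
  (count a s < count b s)%N.
Proof.
elim: s => [|x s IH] H [y]; first by rewrite in_nil.
have H' : forall y, y \in s -> a y -> b y by move=> z Hz; apply: H; rewrite inE Hz orbT.
have Hx : (a x <= b x)%N.
  by case: (a x) (H x (mem_head x s)) => //= /(_ isT) ->.
rewrite inE => /orP [/eqP -> | Hy] Hab /=.
  move: Hab => /andP [-> Ha]; rewrite (negbTE Ha).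
  have := count_le_in H'; lia.
have := IH H' (ex_intro2 _ _ y Hy Hab); lia.
Qed.

Lemma step_lemma C X : W X -> expect X (dom_aux C (height X) X) != 1 ->
  [/\ W (condP X (dom_aux C (height X) X)),
      expect (condP X (dom_aux C (height X) X))
        (dom_aux C (height X) (condP X (dom_aux C (height X) X))) = 0 &
      (supp (condP X (dom_aux C (height X) X)) <= supp X)%N].
Proof.
move=> HW Hx; have HM := DB C (erefl _) HW.
split; first exact: WC (erefl _) HW HM Hx.
  exact: Z (erefl _) HW Hx.
apply: count_le_in => l; rewrite mem_all_strings => /eqP Hs Hv.
by have [] := cond_support HW HM Hx Hs Hv.
Qed.

Lemma step_strict C X : W X -> expect X (dom_aux (~~ C) (height X) X) = 0 ->
  expect X (dom_aux C (height X) X) != 1 ->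
  (supp (condP X (dom_aux C (height X) X)) < supp X)%N.
Proof.
move=> HW H0 Hx; have HM := DB C (erefl _) HW.
have [l [Hs [Hv Hd]]] := Olem (erefl _) HW.
have Hz := pos_terms HW (fun l => proj1 (andP (DB (~~ C) (erefl _) HW l))) H0 Hs Hv.
have H1 : dom_aux C (height X) X l = 1.
  destruct C; simpl in Hz; case: Hd => H //; rewrite Hz in H;
    by move/eqP: H; rewrite eq_sym oner_eq0.
apply: count_lt_in.
  move=> x; rewrite mem_all_strings => /eqP Hsx Hvx.
  by have [] := cond_support HW HM Hx Hsx Hvx.
exists l; first by rewrite mem_all_strings Hs.
rewrite Hv /=; apply/negP => HvQ.
by have [_] := cond_support HW HM Hx Hs HvQ; rewrite H1 eqxx.
Qed.

End Proof.

Theorem lemma3p44 (R : realType) (P : protocol R) :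
  valid P ->
  exists (C : bool) (j : nat),
    expect_opt (PiSeq P C j) (dom C (PiSeq P C j)) = 1.
Proof.
move=> HV; apply: NNPP => Hne.
have H : forall C j, expect_opt (PiSeq P C j) (dom C (PiSeq P C j)) != 1.
  by move=> C j; apply/eqP => E; apply: Hne; exists C, j.
have HW := valid_W HV.
have Hind : forall j, exists B, PiB P j = Some B /\ W B /\
    expect B (dom_aux true (height B) B) = 0 /\ (supp B + 2 * j <= supp P)%N.
  elim => [|j [B [HB [WB [EB0 Hsz]]]]].
    move: (H true 0%N) => /= H0.
    have [W1 E1 S1] := step_lemma HW H0.
    exists (condP P (dom_aux true (height P) P)); split; first by rewrite /PiB /= (negbTE H0).
    by split => //; split => //; rewrite muln0 addn0.
  have H1 : expect B (dom_aux false (height B) B) != 1.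
    by move: (H false j); rewrite /PiSeq HB.
  set A' := condP B (dom_aux false (height B) B).
  have HA : PiA P j.+1 = Some A'.
    by change (cond (PiB P j) (dom false (PiB P j)) = Some A'); rewrite HB /= (negbTE H1).
  have [WA EA SA] := step_lemma WB H1.
  have LA := step_strict (C := false) WB EB0 H1.
  have H2 : expect A' (dom_aux true (height A') A') != 1.
    by move: (H true j.+1); rewrite /PiSeq HA.
  have [WB' EB' SB'] := step_lemma WA H2.
  have LB := step_strict (C := true) WA EA H2.
  exists (condP A' (dom_aux true (height A') A')); split.
    by rewrite /PiB HA /= (negbTE H2).
  split => //; split => //.
  move: LA LB Hsz; rewrite -/A'; lia.
have [B [_ [WB [_ Hsz]]]] := Hind (supp P).
have := supp_pos WB; lia.
Qed.
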